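(* Let $p>2$ be a prime and $n$ a natural number with $n+1<p$. Let $(A,+,\circ)$ be a left brace of cardinality $p^{n}$ which is strongly nilpotent of nilpotency index $k<p$, and suppose the group $(A,\circ)$ is powerful. Let $\gamma$ be a primitive root modulo $p^{p}$, $\xi=\gamma^{p^{p-1}}$, and define $a\cdot b=\sum_{i=0}^{p-2}\xi^{p-1-i}\big((\xi^{i}a)*b\big)$ for $a,b\in A$. Then the pre-Lie ring $(A,+,\cdot)$ is powerful, i.e. $a\cdot b-b\cdot a\in pA$ for all $a,b\in A$.
   Context: A (left) brace is a set $A$ with operations $+,\circ$ such that $(A,+)$ is an abelian group, $(A,\circ)$ is a group, and $a\circ(b+c)+a=a\circ b+a\circ c$; $a*b=a\circ b-a-b$. $A$ is strongly nilpotent of index $k$ if $A^{[k]}=0\ne A^{[k-1]}$, where $A^{[1]}=A$ and $A^{[i]}$ is the additive span of $a*b$ with $a\in A^{[j]}$, $b\in A^{[i-j]}$, $0<j<i$. Under these hypotheses $(A,+,\cdot)$ is a pre-Lie ring. A finite $p$-group $G$ ($p>2$) is powerful if $G'\le G^{p}=\langle g^{p}\rangle$. *)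

(* Defs.v *)
From HB Require Import structures.
From mathcomp Require Import all_boot all_order all_algebra.
Set Implicit Arguments. Unset Strict Implicit. Unset Printing Implicit Defensive.
Import GRing.Theory.
Local Open Scope ring_scope.

Record brace (T : zmodType) := Brace {
  circ : T -> T -> T;
  cinv : T -> T;
  cone : T;
  circA : forall a b c, circ a (circ b c) = circ (circ a b) c;
  circ1l : forall a, circ cone a = a;
  circ1r : forall a, circ a cone = a;
  circVl : forall a, circ (cinv a) a = cone;
  circVr : forall a, circ a (cinv a) = cone;
  brace_ax : forall a b c, circ a (b + c) + a = circ a b + circ a c
}.

Section BraceDefs.
Variables (T : zmodType) (B : brace T).

Definition bstar (a b : T) : T := circ B a b - a - b.

(* A^[i] : A^[1] = A, A^[i] = additive span of a*b, a in A^[j], b in A^[i-j], 0<j<i.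
   (Inductive characterization of the additive subgroup generated.) *)
Inductive sn_ideal : nat -> T -> Prop :=
| sn_one : forall a, sn_ideal 1 a
| sn_zero : forall i, sn_ideal i 0
| sn_star : forall i j a b, (0 < j)%N -> (j < i)%N ->
    sn_ideal j a -> sn_ideal (i - j) b -> sn_ideal i (bstar a b)
| sn_sub : forall i x y, sn_ideal i x -> sn_ideal i y -> sn_ideal i (x - y).

(* strongly nilpotent of index k: A^[k] = 0 <> A^[k-1] (k >= 1; for k = 1
   A^[0] is not defined and the condition reduces to A = 0). *)
Definition strongly_nilpotent_index (k : nat) : Prop :=
  (1 <= k)%N /\ (forall x, sn_ideal k x -> x = 0) /\
  (k = 1%N \/ exists x, sn_ideal k.-1 x /\ x <> 0).

Fixpoint cpow (a : T) (m : nat) : T :=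
  match m with 0%N => cone B | m'.+1 => circ B (cpow a m') a end.

Definition in_gen_subgroup (S : T -> Prop) (x : T) : Prop :=
  forall H : T -> Prop,
    H (cone B) -> (forall u v, H u -> H v -> H (circ B u v)) ->
    (forall u, H u -> H (cinv B u)) -> (forall u, S u -> H u) -> H x.

Definition ccomm (a b : T) : T :=
  circ B (circ B (circ B (cinv B a) (cinv B b)) a) b.

(* (A,o) is powerful: G' <= G^p, i.e. the commutator subgroup (generated by
   all commutators) is contained in the subgroup generated by p-th powers. *)
Definition circ_powerful (p : nat) : Prop :=
  forall x, in_gen_subgroup (fun c => exists a b, c = ccomm a b) x ->
            in_gen_subgroup (fun y => exists g, y = cpow g p) x.

Definition predot (p : nat) (xi : int) (a b : T) : T :=
  \sum_(i < p.-1) bstar (a *~ (xi ^+ i)) b *~ (xi ^+ (p.-1 - i)).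

End BraceDefs.

Definition primitive_root_mod (gamma : int) (m : nat) : Prop :=
  coprimez gamma (m%:Z) /\
  forall e : nat, (0 < e)%N -> (e < totient m)%N ->
    ~ ((m%:Z %| gamma ^+ e - 1)%Z).

(* Main.v *)
Require Import Defs.
From HB Require Import structures.
From mathcomp Require Import all_boot all_order all_algebra.
Import GRing.Theory.
Local Open Scope ring_scope.
Set Implicit Arguments. Unset Strict Implicit.

Lemma addf_props (T : zmodType) (f : T -> T) :
  (forall x y, f (x + y) = f x + f y) ->
  [/\ f 0 = 0, forall x, f (- x) = - f x,
      forall x n, f (x *+ n) = f x *+ n & forall x z, f (x *~ z) = f x *~ z].
Proof.
move=> fD.
have f0 : f 0 = 0.
  have := fD 0 0; rewrite addr0 => /(congr1 (fun t => t - f 0)).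
  by rewrite subrr addrK.
have fN : forall x, f (- x) = - f x.
  by move=> x; apply/eqP; rewrite -addr_eq0 -fD addNr f0.
have fMn : forall x n, f (x *+ n) = f x *+ n.
  move=> x; elim=> [|n IH]; first by rewrite !mulr0n.
  by rewrite !mulrS fD IH.
split=> // x [] n; first by rewrite -!pmulrn fMn.
by rewrite !NegzE !mulrNz fN -!pmulrn fMn.
Qed.

Definition inpA (T : zmodType) (p : nat) (x : T) := exists d, x = d *+ p.

Lemma inpA0 (T : zmodType) (p : nat) : inpA p (0 : T).
Proof. by exists 0; rewrite mul0rn. Qed.

Lemma inpAD (T : zmodType) (p : nat) (x y : T) : inpA p x -> inpA p y -> inpA p (x + y).
Proof. by move=> [d ->] [e ->]; exists (d + e); rewrite mulrnDl. Qed.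

Lemma inpAN (T : zmodType) (p : nat) (x : T) : inpA p x -> inpA p (- x).
Proof. by move=> [d ->]; exists (- d); rewrite mulNrn. Qed.

Lemma inpAB (T : zmodType) (p : nat) (x y : T) : inpA p x -> inpA p y -> inpA p (x - y).
Proof. by move=> hx hy; apply: inpAD => //; apply: inpAN. Qed.

Lemma inpAz (T : zmodType) (p : nat) (x : T) z : inpA p x -> inpA p (x *~ z).
Proof.
move=> [d ->]; exists (d *~ z).
have [_ _ _ h] := @addf_props _ (fun t : T => t *+ p) (fun a b => mulrnDl p a b).
by rewrite h.
Qed.

Lemma inpAtrans (T : zmodType) (p : nat) (x y w : T) :
  inpA p (x - y) -> inpA p (y - w) -> inpA p (x - w).
Proof. by move=> h1 h2; have := inpAD h1 h2; rewrite addrA subrK. Qed.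

Definition lam (T : zmodType) (B : brace T) u x := circ B u x - u.

Lemma lamD (T : zmodType) (B : brace T) u x y :
  lam B u (x + y) = lam B u x + lam B u y.
Proof.
rewrite /lam -[X in X - u = _](addrK u) brace_ax.
by rewrite addrACA addrA.
Qed.

Lemma bstarD (T : zmodType) (B : brace T) u x y :
  bstar B u (x + y) = bstar B u x + bstar B u y.
Proof.
rewrite /bstar -!/(lam B u _) lamD opprD.
by rewrite addrACA.
Qed.

Lemma cone0 (T : zmodType) (B : brace T) : cone B = 0.
Proof.
by have := brace_ax B (cone B) 0 0; rewrite !circ1l !addr0 add0r.
Qed.

Lemma circ_lam (T : zmodType) (B : brace T) u x : circ B u x = u + lam B u x.
Proof. by rewrite /lam addrC subrK. Qed.

Lemma circ_cancel (T : zmodType) (B : brace T) u x y :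
  circ B u x = circ B u y -> x = y.
Proof.
move=> h; rewrite -[x](circ1l B) -(circVl B u) -circA h.
by rewrite circA circVl circ1l.
Qed.

Lemma inpA_gen (T : zmodType) (B : brace T) p (x : T) :
  in_gen_subgroup B (fun y => exists g, y = cpow B g p) x ->
  (forall g, inpA p (cpow B g p)) -> inpA p x.
Proof.
move=> hx hg; apply: hx.
- by rewrite cone0; apply: inpA0.
- move=> u v hu [e ->]; rewrite circ_lam.
  have [_ _ h _] := addf_props (lamD B u); rewrite h.
  by apply: inpAD => //; exists (lam B u e).
- move=> u [d ->].
  set e := circ B (cinv B (d *+ p)) (d *+ p - d).
  exists e; apply: (@circ_cancel _ B (d *+ p)).
  rewrite !circ_lam; congr (_ + _).
  have [_ _ h _] := addf_props (lamD B (d *+ p)); rewrite h.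
  rewrite /lam circVr /e circA circVr circ1l cone0 add0r.
  by rewrite addrAC subrr add0r mulNrn.
- by move=> u [g ->]; apply: hg.
Qed.

Lemma comm_id (T : zmodType) (B : brace T) x y :
  circ B (circ B y x) (ccomm B x y) = circ B x y.
Proof.
rewrite /ccomm !circA -(circA B y x) circVr circ1r circVr circ1l.
by [].
Qed.

Lemma star_comm (T : zmodType) (B : brace T) p :
  (forall g, inpA p (cpow B g p)) -> circ_powerful B p ->
  forall x y, inpA p (bstar B x y - bstar B y x).
Proof.
move=> hg hpow x y.
have hc : inpA p (ccomm B x y).
  apply: inpA_gen hg; apply: hpow.
  by move=> H _ _ _ hS; apply: hS; exists x, y.
have -> : bstar B x y - bstar B y x = lam B (circ B y x) (ccomm B x y).
  rewrite /lam comm_id /bstar.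
  by rewrite !opprB -!addrA; congr (_ + _); rewrite addrCA !addKr.
case: hc => d ->.
have [_ _ h _] := addf_props (lamD B (circ B y x)); rewrite h.
by exists (lam B (circ B y x) d).
Qed.

Lemma cpow_comm (T : zmodType) (B : brace T) g m :
  circ B (cpow B g m) g = circ B g (cpow B g m).
Proof.
elim: m => [|m IH] /=; first by rewrite circ1l circ1r.
by rewrite [RHS]circA -IH.
Qed.

Lemma cpow_formula (T : zmodType) (B : brace T) g K :
  iter K (bstar B g) g = 0 ->
  forall m, cpow B g m = \sum_(i < K) iter i (bstar B g) g *+ 'C(m, i.+1).
Proof.
move=> hK.
have [D0 _ DMn _] := addf_props (bstarD B g).
elim=> [|m IH].
  rewrite /= cone0 big1 // => i _; by rewrite mulr0n.
have -> : cpow B g m.+1 = g + cpow B g m + bstar B g (cpow B g m).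
  by rewrite /= cpow_comm /bstar -addrA [cpow B g m + _]addrC subrK [RHS]addrC subrK.
rewrite IH (big_morph (bstar B g) (bstarD B g) D0).
under [X in _ + X = _]eq_bigr => i _ do rewrite DMn.
under [RHS]eq_bigr => i _ do rewrite binS mulrnDr.
rewrite big_split /= -addrA addrCA; congr (_ + _).
have e1 := @big_ord_recl T 0 +%R K (fun i : 'I_K.+1 => iter i (bstar B g) g *+ 'C(m, i)).
have e2 := @big_ord_recr T 0 +%R K (fun i : 'I_K.+1 => iter i (bstar B g) g *+ 'C(m, i)).
rewrite /= hK mul0rn addr0 in e2.
rewrite -e2 e1 /= bin0 mulr1n.
by congr (_ + _); apply: eq_bigr => i _; rewrite /bump /= add1n.
Qed.

Lemma sn_iter (T : zmodType) (B : brace T) g i :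
  sn_ideal B i.+1 (iter i (bstar B g) g).
Proof.
elim: i => [|i IH] /=; first exact: sn_one.
by apply: (@sn_star _ B i.+2 1) => //; exact: sn_one.
Qed.

Lemma cpow_pA (T : zmodType) (B : brace T) p k g :
  prime p -> strongly_nilpotent_index B k -> (k < p)%N -> inpA p (cpow B g p).
Proof.
move=> pp [k1 [hk _]] kp.
have hK : iter k.-1 (bstar B g) g = 0.
  by apply: hk; have := sn_iter B g k.-1; rewrite prednK.
rewrite (cpow_formula hK p).
apply: (big_ind (inpA p)); [exact: inpA0 | exact: inpAD |].
move=> i _.
have : (p %| 'C(p, i.+1))%N.
  apply: prime_dvd_bin => //; apply/andP; split => //.
  exact: leq_ltn_trans (leq_trans (ltn_ord i) (leq_pred k)) kp.
move=> /dvdnP [q ->]; exists (iter i (bstar B g) g *+ q).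
by rewrite mulrnA.
Qed.

Lemma predot_term (T : zmodType) (B : brace T) p a b z :
  (forall x y, inpA p (bstar B x y - bstar B y x)) ->
  inpA p (bstar B (a *~ z) b - bstar B (b *~ z) a).
Proof.
move=> hc.
have [_ _ _ hz] := addf_props (bstarD B b).
have [_ _ _ hz'] := addf_props (bstarD B a).
apply: (inpAtrans (hc _ _)); rewrite hz.
apply: (inpAtrans (y := bstar B a b *~ z)).
  by rewrite -mulrzBl; apply: inpAz.
rewrite -hz'; exact: hc.
Qed.

Unset Implicit Arguments. Set Strict Implicit.

Theorem proposition2p9 (p n k : nat) (T : finZmodType) (B : brace T) (gamma : int) :
  prime p -> (2 < p)%N -> (n.+1 < p)%N ->
  #|T| = (p ^ n)%N ->
  strongly_nilpotent_index B k -> (k < p)%N ->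
  circ_powerful B p ->
  primitive_root_mod gamma (p ^ p) ->
  let xi := gamma ^+ (p ^ p.-1) in
  forall a b : T, exists c : T,
    predot B p xi a b - predot B p xi b a = c *+ p.
Proof.
move=> pp p2 np hT hnil kp hpow hgam xi a b.
have hg : forall g, inpA p (cpow B g p) by move=> g; exact: cpow_pA pp hnil kp.
have hc := star_comm hg hpow.
rewrite /predot -sumrB.
apply: (big_ind (inpA p)); [exact: inpA0 | exact: inpAD |].
move=> i _; rewrite -mulrzBl; apply: inpAz; exact: predot_term.
Qed.
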